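(* Let $k_1,k_2,k_3$ be real constants and use polar coordinates $x=r\cos\theta$, $y=r\sin\theta$ ($r>0$). For the potential $$V=\frac{k_1}{r^2}+\frac{k_2e^{\sqrt3\theta}+k_3e^{-\sqrt3\theta}}{r^3},$$ the function $$J=p_\theta^3+\frac34\Big[2k_1+\frac3r\big(k_2e^{\sqrt3\theta}+k_3e^{-\sqrt3\theta}\big)\Big]p_\theta+\frac{3\sqrt3}{4}\big(k_2e^{\sqrt3\theta}-k_3e^{-\sqrt3\theta}\big)p_r$$ is a first integral of $\ddot x=-V_{,x}$, $\ddot y=-V_{,y}$, where $p_r=\dot r$ and $p_\theta=x\dot y-y\dot x=r^2\dot\theta$.
   Context: A first integral is a function of $(t,x,y,\dot x,\dot y)$ whose total time derivative vanishes along every solution of the given equations of motion. *)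

(* Defs.v *)
From Stdlib Require Import Reals Lra.
From Coquelicot Require Import Coquelicot.
Open Scope R_scope.

Definition rad (x y : R) : R := sqrt (x ^ 2 + y ^ 2).

(* Local branch of the polar angle near a point whose angle is th0:
   rotate by -th0 and take atan; this is a smooth angle function on the
   open half-plane {x cos th0 + y sin th0 > 0}, equal to th0 at points
   with polar angle th0. *)
Definition angle_branch (th0 x y : R) : R :=
  th0 + atan ((- x * sin th0 + y * cos th0) / (x * cos th0 + y * sin th0)).

Definition Vpolar (k1 k2 k3 r th : R) : R :=
  k1 / r ^ 2 + (k2 * exp (sqrt 3 * th) + k3 * exp (- sqrt 3 * th)) / r ^ 3.

Definition Vcart (k1 k2 k3 th0 x y : R) : R :=
  Vpolar k1 k2 k3 (rad x y) (angle_branch th0 x y).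

Definition Jfun (k1 k2 k3 r th pr pth : R) : R :=
  pth ^ 3
  + 3 / 4 * (2 * k1 + 3 / r * (k2 * exp (sqrt 3 * th) + k3 * exp (- sqrt 3 * th))) * pth
  + 3 * sqrt 3 / 4 * (k2 * exp (sqrt 3 * th) - k3 * exp (- sqrt 3 * th)) * pr.

(* Main.v *)
Require Import Defs.
From Stdlib Require Import Reals Lra Nsatz.
From Coquelicot Require Import Coquelicot.
Open Scope R_scope.
Definition Ep k2 k3 th := k2 * exp (sqrt 3 * th) + k3 * exp (- sqrt 3 * th).
Definition Fp k2 k3 th := k2 * exp (sqrt 3 * th) - k3 * exp (- sqrt 3 * th).
Definition Vr k1 k2 k3 r th := -2 * k1 / r^3 - 3 * Ep k2 k3 th / r^4.
Definition Vt k2 k3 r th := sqrt 3 * Fp k2 k3 th / r^3.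

Lemma Vx_der k1 k2 k3 th0 u0 v0 : 0 < rad u0 v0 -> u0 = rad u0 v0 * cos th0 -> v0 = rad u0 v0 * sin th0 ->
  is_derive (fun u => Vcart k1 k2 k3 th0 u v0) u0
   (Vr k1 k2 k3 (rad u0 v0) th0 * cos th0 - Vt k2 k3 (rad u0 v0) th0 * sin th0 / rad u0 v0).
Proof.
intros Hr Hu Hv.
unfold Vcart, Vpolar, rad, angle_branch, Vr, Vt, Ep, Fp in *.
replace (u0 ^ 2 + v0 ^ 2) with (u0 * (u0 * 1) + v0 * (v0 * 1)) in * by ring.
set (r := sqrt (u0 * (u0 * 1) + v0 * (v0 * 1))) in *.
assert (Hpos : 0 < u0 * (u0 * 1) + v0 * (v0 * 1)).
{ destruct (Req_dec (u0 * (u0 * 1) + v0 * (v0 * 1)) 0) as [E|E].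
  - unfold r in Hr; rewrite E, sqrt_0 in Hr; lra.
  - nra. }
assert (Hsc := sin2_cos2 th0). unfold Rsqr in Hsc.
assert (HD : u0 * cos th0 + v0 * sin th0 = r).
{ rewrite Hu at 1; rewrite Hv at 1. transitivity (r * (sin th0 * sin th0 + cos th0 * cos th0)); [ring | rewrite Hsc; ring]. }
auto_derive.
{ rewrite HD. fold r. repeat split; try lra; apply Rgt_not_eq; repeat apply Rmult_lt_0_compat; lra. }
rewrite HD.
replace (- u0 * sin th0 + v0 * cos th0) with 0 by (rewrite Hu at 1; rewrite Hv at 1; ring).
repeat rewrite Rmult_0_l. fold r. rewrite atan_0, !Rplus_0_r. clearbody r. subst u0. field. lra.
Qed.

Lemma Vy_der k1 k2 k3 th0 u0 v0 : 0 < rad u0 v0 -> u0 = rad u0 v0 * cos th0 -> v0 = rad u0 v0 * sin th0 ->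
  is_derive (fun v => Vcart k1 k2 k3 th0 u0 v) v0
   (Vr k1 k2 k3 (rad u0 v0) th0 * sin th0 + Vt k2 k3 (rad u0 v0) th0 * cos th0 / rad u0 v0).
Proof.
intros Hr Hu Hv.
unfold Vcart, Vpolar, rad, angle_branch, Vr, Vt, Ep, Fp in *.
replace (u0 ^ 2 + v0 ^ 2) with (u0 * (u0 * 1) + v0 * (v0 * 1)) in * by ring.
set (r := sqrt (u0 * (u0 * 1) + v0 * (v0 * 1))) in *.
assert (Hpos : 0 < u0 * (u0 * 1) + v0 * (v0 * 1)).
{ destruct (Req_dec (u0 * (u0 * 1) + v0 * (v0 * 1)) 0) as [E|E].
  - unfold r in Hr; rewrite E, sqrt_0 in Hr; lra.
  - nra. }
assert (Hsc := sin2_cos2 th0). unfold Rsqr in Hsc.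
assert (HD : u0 * cos th0 + v0 * sin th0 = r).
{ rewrite Hu at 1; rewrite Hv at 1. transitivity (r * (sin th0 * sin th0 + cos th0 * cos th0)); [ring | rewrite Hsc; ring]. }
auto_derive.
{ rewrite HD. fold r. repeat split; try lra; apply Rgt_not_eq; repeat apply Rmult_lt_0_compat; lra. }
rewrite HD.
replace (- u0 * sin th0 + v0 * cos th0) with 0 by (rewrite Hu at 1; rewrite Hv at 1; ring).
repeat rewrite Rmult_0_l. fold r. rewrite atan_0, !Rplus_0_r. clearbody r. subst v0. field. lra.
Qed.
Lemma J_der k1 k2 k3 (RR TH PR PTH : R -> R) t dR dTH dPR dPTH :
  is_derive RR t dR -> is_derive TH t dTH -> is_derive PR t dPR -> is_derive PTH t dPTH ->
  RR t <> 0 -> dR = PR t -> dTH = PTH t / RR t ^ 2 -> dPTH = - Vt k2 k3 (RR t) (TH t) ->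
  dPR = RR t * dTH ^ 2 - Vr k1 k2 k3 (RR t) (TH t) ->
  is_derive (fun s => Jfun k1 k2 k3 (RR s) (TH s) (PR s) (PTH s)) t 0.
Proof.
intros HR HT HP HQ Hr E1 E2 E3 E4.
unfold Jfun. auto_derive.
{ repeat split; auto; eexists; eauto. }
replace (Derive (fun x => RR x) t) with dR by (symmetry; apply is_derive_unique; exact HR).
replace (Derive (fun x => TH x) t) with dTH by (symmetry; apply is_derive_unique; exact HT).
replace (Derive (fun x => PR x) t) with dPR by (symmetry; apply is_derive_unique; exact HP).
replace (Derive (fun x => PTH x) t) with dPTH by (symmetry; apply is_derive_unique; exact HQ).
rewrite E4, E3, E2, E1. unfold Vr, Vt, Ep, Fp.
assert (Hq : sqrt 3 * sqrt 3 = 3) by (apply sqrt_sqrt; lra).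
set (q := sqrt 3) in *. set (e1 := exp (q * TH t)). set (e2 := exp (- q * TH t)).
set (r := RR t) in *. set (p := PTH t). set (pr := PR t).
assert (Hi : r * / r = 1) by (field; auto).
set (ir := / r) in *.
cbv [pow]. rewrite !Rmult_1_r. unfold Rdiv. rewrite !Rinv_mult. fold ir.
assert (H4 : 4 * / 4 = 1) by (field; lra).
set (i4 := / 4) in *.
cbv [pow].
nsatz.
Qed.
Lemma rad_der (X Y : R -> R) s dX dY : is_derive X s dX -> is_derive Y s dY -> 0 < rad (X s) (Y s) ->
  is_derive (fun u => rad (X u) (Y u)) s ((X s * dX + Y s * dY) / rad (X s) (Y s)).
Proof.
intros HX HY Hr. unfold rad in *.
assert (Hpos : 0 < X s ^ 2 + Y s ^ 2).
{ destruct (Req_dec (X s ^ 2 + Y s ^ 2) 0) as [E|E].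
  - rewrite E, sqrt_0 in Hr; lra.
  - nra. }
auto_derive.
{ repeat split; try (eexists; eauto). simpl; lra. }
replace (Derive (fun x => X x) s) with dX by (symmetry; apply is_derive_unique; exact HX).
replace (Derive (fun x => Y x) s) with dY by (symmetry; apply is_derive_unique; exact HY).
replace (X s * (X s * 1) + Y s * (Y s * 1)) with (X s ^ 2 + Y s ^ 2) by ring.
field. lra.
Qed.

Lemma pr_der (X DX Y DY RR : R -> R) t dX dDX dY dDY dR :
  is_derive X t dX -> is_derive DX t dDX -> is_derive Y t dY -> is_derive DY t dDY ->
  is_derive RR t dR -> RR t <> 0 ->
  is_derive (fun s => (X s * DX s + Y s * DY s) / RR s) t
    (((dX * DX t + X t * dDX + (dY * DY t + Y t * dDY)) * RR t - (X t * DX t + Y t * DY t) * dR) / (RR t * RR t)).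
Proof.
intros H1 H2 H3 H4 H5 Hr.
auto_derive.
{ repeat split; auto; eexists; eauto. }
replace (Derive (fun x => X x) t) with dX by (symmetry; apply is_derive_unique; assumption).
replace (Derive (fun x => DX x) t) with dDX by (symmetry; apply is_derive_unique; assumption).
replace (Derive (fun x => Y x) t) with dY by (symmetry; apply is_derive_unique; assumption).
replace (Derive (fun x => DY x) t) with dDY by (symmetry; apply is_derive_unique; assumption).
replace (Derive (fun x => RR x) t) with dR by (symmetry; apply is_derive_unique; assumption).
field. auto.
Qed.

Lemma pth_der (X DX Y DY : R -> R) t dX dDX dY dDY :
  is_derive X t dX -> is_derive DX t dDX -> is_derive Y t dY -> is_derive DY t dDY ->
  is_derive (fun s => X s * DY s - Y s * DX s) t (dX * DY t + X t * dDY - (dY * DX t + Y t * dDX)).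
Proof.
intros H1 H2 H3 H4.
auto_derive.
{ repeat split; auto; eexists; eauto. }
replace (Derive (fun x => X x) t) with dX by (symmetry; apply is_derive_unique; assumption).
replace (Derive (fun x => DX x) t) with dDX by (symmetry; apply is_derive_unique; assumption).
replace (Derive (fun x => Y x) t) with dY by (symmetry; apply is_derive_unique; assumption).
replace (Derive (fun x => DY x) t) with dDY by (symmetry; apply is_derive_unique; assumption).
ring.
Qed.

Lemma cos_der (RR TH : R -> R) t dR dT : is_derive RR t dR -> is_derive TH t dT ->
  is_derive (fun s => RR s * cos (TH s)) t (dR * cos (TH t) - RR t * sin (TH t) * dT).
Proof.
intros H1 H2. auto_derive.
{ repeat split; auto; eexists; eauto. }
replace (Derive (fun x => RR x) t) with dR by (symmetry; apply is_derive_unique; assumption).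
replace (Derive (fun x => TH x) t) with dT by (symmetry; apply is_derive_unique; assumption).
ring.
Qed.

Lemma sin_der (RR TH : R -> R) t dR dT : is_derive RR t dR -> is_derive TH t dT ->
  is_derive (fun s => RR s * sin (TH s)) t (dR * sin (TH t) + RR t * cos (TH t) * dT).
Proof.
intros H1 H2. auto_derive.
{ repeat split; auto; eexists; eauto. }
replace (Derive (fun x => RR x) t) with dR by (symmetry; apply is_derive_unique; assumption).
replace (Derive (fun x => TH x) t) with dT by (symmetry; apply is_derive_unique; assumption).
ring.
Qed.

Lemma alg1 r c s x0 y0 x1 y1 th1 dR : r <> 0 -> x0 = r*c -> y0 = r*s -> c*c+s*s=1 ->
  x1 = dR*c - r*s*th1 -> y1 = dR*s + r*c*th1 -> th1 = (x0*y1 - y0*x1)/r^2.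
Proof.
intros Hr H1 H2 H3 H4 H5.
cbv [pow]. rewrite !Rmult_1_r. unfold Rdiv. rewrite !Rinv_mult.
assert (Hi : r * / r = 1) by (field; auto). set (ir := / r) in *. nsatz.
Qed.

Lemma alg2 r c s x0 y0 x1 y1 x2 y2 Vr Vt : r <> 0 -> x0 = r*c -> y0 = r*s -> c*c+s*s=1 ->
  x2 = -(Vr*c - Vt*s/r) -> y2 = -(Vr*s + Vt*c/r) -> x1*y1 + x0*y2 - (y1*x1 + y0*x2) = - Vt.
Proof.
intros Hr H1 H2 H3 H4 H5. unfold Rdiv in *.
assert (Hi : r * / r = 1) by (field; auto). set (ir := / r) in *. nsatz.
Qed.

Lemma alg3 r c s x0 y0 x1 y1 x2 y2 th1 dR Vr Vt : r <> 0 -> x0 = r*c -> y0 = r*s -> c*c+s*s=1 ->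
  dR = (x0*x1+y0*y1)/r ->
  x1 = dR*c - r*s*th1 -> y1 = dR*s + r*c*th1 ->
  x2 = -(Vr*c - Vt*s/r) -> y2 = -(Vr*s + Vt*c/r) ->
  ((x1 * x1 + x0 * x2 + (y1 * y1 + y0 * y2)) * r - (x0 * x1 + y0 * y1) * dR) / (r * r)
  = r * th1 ^ 2 - Vr.
Proof.
intros Hr H1 H2 H3 H0 H4 H5 H6 H7. cbv [pow]. rewrite !Rmult_1_r. unfold Rdiv in *. rewrite !Rinv_mult.
assert (Hi : r * / r = 1) by (field; auto). set (ir := / r) in *. nsatz.
Qed.

Theorem mainTheorem6 (k1 k2 k3 a b : R) (x y th : R -> R) :
  (forall t, a < t < b ->
     ex_derive x t /\ ex_derive (Derive x) t /\
     ex_derive y t /\ ex_derive (Derive y) t /\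
     ex_derive th t /\
     0 < rad (x t) (y t) /\
     x t = rad (x t) (y t) * cos (th t) /\
     y t = rad (x t) (y t) * sin (th t) /\
     Derive (Derive x) t = - Derive (fun u => Vcart k1 k2 k3 (th t) u (y t)) (x t) /\
     Derive (Derive y) t = - Derive (fun v => Vcart k1 k2 k3 (th t) (x t) v) (y t)) ->
  forall t, a < t < b ->
    is_derive
      (fun s => Jfun k1 k2 k3 (rad (x s) (y s)) (th s)
                  (Derive (fun u => rad (x u) (y u)) s)
                  (x s * Derive y s - y s * Derive x s))
      t 0.
Proof.
intros H t Ht.
assert (Hloc : locally t (fun s => a < s < b)).
{ apply (locally_interval _ t a b); simpl; try tauto. }
assert (Hrd : forall s, a < s < b -> is_derive (fun u => rad (x u) (y u)) s
   ((x s * Derive x s + y s * Derive y s) / rad (x s) (y s))).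
{ intros s Hs. destruct (H s Hs) as (A1 & A2 & A3 & A4 & A5 & A6 & _).
  apply rad_der; auto; apply Derive_correct; auto. }
destruct (H t Ht) as (hx & hx' & hy & hy' & hth & hr & Hxc & Hys & Hx2 & Hy2).
set (r := rad (x t) (y t)) in *.
set (dR := (x t * Derive x t + y t * Derive y t) / r).
assert (HdR : is_derive (fun u => rad (x u) (y u)) t dR) by (apply Hrd; auto).
assert (Hx1 : Derive x t = dR * cos (th t) - r * sin (th t) * Derive th t).
{ apply is_derive_unique. apply (is_derive_ext_loc (fun s => rad (x s) (y s) * cos (th s))).
  - eapply filter_imp; [|exact Hloc]. intros s Hs. simpl. symmetry. apply (H s Hs).
  - apply cos_der; auto. apply Derive_correct; auto. }
assert (Hy1 : Derive y t = dR * sin (th t) + r * cos (th t) * Derive th t).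
{ apply is_derive_unique. apply (is_derive_ext_loc (fun s => rad (x s) (y s) * sin (th s))).
  - eapply filter_imp; [|exact Hloc]. intros s Hs. simpl. symmetry. apply (H s Hs).
  - apply sin_der; auto. apply Derive_correct; auto. }
assert (HVx := Vx_der k1 k2 k3 (th t) (x t) (y t) hr Hxc Hys).
assert (HVy := Vy_der k1 k2 k3 (th t) (x t) (y t) hr Hxc Hys).
fold r in HVx, HVy.
assert (Ex2 : Derive (Derive x) t = - (Vr k1 k2 k3 r (th t) * cos (th t) - Vt k2 k3 r (th t) * sin (th t) / r)).
{ rewrite Hx2. f_equal. apply is_derive_unique. exact HVx. }
assert (Ey2 : Derive (Derive y) t = - (Vr k1 k2 k3 r (th t) * sin (th t) + Vt k2 k3 r (th t) * cos (th t) / r)).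
{ rewrite Hy2. f_equal. apply is_derive_unique. exact HVy. }
clear Hx2 Hy2.
assert (Hsc := sin2_cos2 (th t)). unfold Rsqr in Hsc.
assert (Hsc' : cos (th t) * cos (th t) + sin (th t) * sin (th t) = 1) by lra.
assert (Hr0 : r <> 0) by lra.
apply (J_der k1 k2 k3 (fun s => rad (x s) (y s)) th (Derive (fun u => rad (x u) (y u)))
   (fun s => x s * Derive y s - y s * Derive x s) t dR (Derive th t)
   (((Derive x t * Derive x t + x t * Derive (Derive x) t + (Derive y t * Derive y t + y t * Derive (Derive y) t)) * r - (x t * Derive x t + y t * Derive y t) * dR) / (r * r))
   (Derive x t * Derive y t + x t * Derive (Derive y) t - (Derive y t * Derive x t + y t * Derive (Derive x) t))).
- exact HdR.
- apply Derive_correct; auto.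
- apply (is_derive_ext_loc (fun s => (x s * Derive x s + y s * Derive y s) / rad (x s) (y s))).
  + eapply filter_imp; [|exact Hloc]. intros s Hs. symmetry. apply is_derive_unique. apply Hrd; auto.
  + apply pr_der; try (apply Derive_correct; auto); auto.
- apply pth_der; apply Derive_correct; auto.
- exact Hr0.
- symmetry. apply is_derive_unique. exact HdR.
- simpl. fold r. eapply alg1; eauto.
- simpl. fold r. eapply alg2; eauto.
- simpl. fold r. eapply alg3; eauto.
Qed.
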